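(* Let $U=(U_{ij})_{i,j=1}^M$, $U_{ij}\in M_M(\mathbb C)$, and $V=(V_{ab})_{a,b=1}^N$, $V_{ab}\in M_N(\mathbb C)$, be projective models, $Q\in M_{M\times N}(\mathbb T)$, $W=U\otimes_QV$ and $W^\circ=U\,{}_Q\!\otimes V$. Then $$\widetilde{W}=\widetilde{U}_{13}\,Q^\delta\,\widetilde{V}_{24},\qquad \widetilde{W^\circ}=\widetilde{V}_{24}\,Q^\delta\,\widetilde{U}_{13},$$ where $Q^\delta=\mathrm{diag}\left(\frac{Q_{ic}Q_{jd}}{Q_{id}Q_{jc}}\right)_{icjd}$ is the diagonal matrix on $\mathbb C^M\otimes\mathbb C^N\otimes\mathbb C^M\otimes\mathbb C^N$ whose entry at the basis vector indexed by $(i,c,j,d)$ is $\frac{Q_{ic}Q_{jd}}{Q_{id}Q_{jc}}$.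
   Context: A square matrix of operators is magic if its entries are orthogonal projections and rows and columns sum to $1$; for $U=(U_{ij})$ with $U_{ij}\in M_n(\mathbb C)$, $(U'_{kl})_{ij}=(U_{ij})_{kl}$, and $U$ is a projective model if $U,U'$ are magic. $(W_{ia,jb})_{kc,ld}=\frac{Q_{ic}Q_{jd}}{Q_{id}Q_{jc}}(U_{ij})_{kl}(V_{ab})_{cd}$ and $(W^\circ_{ia,jb})_{kc,ld}=\frac{Q_{ka}Q_{lb}}{Q_{kb}Q_{la}}(U_{ij})_{kl}(V_{ab})_{cd}$. For such a matrix $U$, $\widetilde U$ is defined by $(\widetilde U_{ij})_{kl}=(U_{jl})_{ik}$, viewed as the element $\sum_{ijkl}(\widetilde U_{ij})_{kl}\,e_{ij}\otimes e_{kl}$ of $M_n(\mathbb C)\otimes M_n(\mathbb C)$. The matrices $\widetilde W,\widetilde{W^\circ}$ (built with $n=MN$) are viewed in $M_M\otimes M_N\otimes M_M\otimes M_N$ via $e_{ia,jb}\otimes e_{kc,ld}=e_{ij}\otimes e_{ab}\otimes e_{kl}\otimes e_{cd}$; $\widetilde U_{13}$ and $\widetilde V_{24}$ are the leg-numbered elements acting on tensor legs $1,3$ and $2,4$ respectively. *)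

(* Defs.v *)
From HB Require Import structures.
From mathcomp Require Import all_boot all_order all_algebra.
From mathcomp Require Import complex.
From mathcomp Require Import Rstruct.
Set Implicit Arguments. Unset Strict Implicit. Unset Printing Implicit Defensive.
Import Order.TTheory GRing.Theory Num.Theory.
Local Open Scope ring_scope.

Definition C : numClosedFieldType := (Rdefinitions.R)[i].

Definition adj n (A : 'M[C]_n) : 'M[C]_n := \matrix_(i, j) (A j i)^*.

Definition is_orth_proj n (P : 'M[C]_n) : Prop := P *m P = P /\ adj P = P.

Definition magic m n (X : 'I_m -> 'I_m -> 'M[C]_n) : Prop :=
  [/\ forall i j, is_orth_proj (X i j),
      forall i, \sum_(j < m) X i j = 1%:M &
      forall j, \sum_(i < m) X i j = 1%:M].

Definition prime_mx n (U : 'I_n -> 'I_n -> 'M[C]_n) : 'I_n -> 'I_n -> 'M[C]_n :=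
  fun k l => \matrix_(i, j) U i j k l.

Definition projective_model n (U : 'I_n -> 'I_n -> 'M[C]_n) : Prop :=
  magic U /\ magic (prime_mx U).

(* A "block family" over index type I: X i j k l = (X_{ij})_{kl}. *)
Definition bfam (I : finType) := I -> I -> I -> I -> C.

Definition bfam_of n (U : 'I_n -> 'I_n -> 'M[C]_n) : bfam 'I_n :=
  fun i j k l => U i j k l.

Definition tilde (I : finType) (X : bfam I) : bfam I :=
  fun i j k l => X j l i k.

Definition tensQ M N (U : 'I_M -> 'I_M -> 'M[C]_M) (V : 'I_N -> 'I_N -> 'M[C]_N)
  (Q : 'M[C]_(M, N)) : bfam ('I_M * 'I_N)%type :=
  fun ia jb kc ld =>
    let: (i, a) := ia in let: (j, b) := jb in
    let: (k, c) := kc in let: (l, d) := ld in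
    (Q i c * Q j d) / (Q i d * Q j c) * U i j k l * V a b c d.

Definition Qtens M N (U : 'I_M -> 'I_M -> 'M[C]_M) (V : 'I_N -> 'I_N -> 'M[C]_N)
  (Q : 'M[C]_(M, N)) : bfam ('I_M * 'I_N)%type :=
  fun ia jb kc ld =>
    let: (i, a) := ia in let: (j, b) := jb in
    let: (k, c) := kc in let: (l, d) := ld in
    (Q k a * Q l b) / (Q k b * Q l a) * U i j k l * V a b c d.

(* The algebra M_M (x) M_N (x) M_M (x) M_N, realised as matrices (functions of
   a row and a column index) indexed by the basis of C^M (x) C^N (x) C^M (x) C^N.
   The matrix unit e_{x y} has row x and column y. *)
Definition leg4 M N := ('I_M * 'I_N * 'I_M * 'I_N)%type.
Definition mx4 M N := leg4 M N -> leg4 M N -> C.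

Definition mul4 M N (A B : mx4 M N) : mx4 M N :=
  fun x y => \sum_(z : leg4 M N) A x z * B z y.

(* X in M_{MN} (x) M_{MN} viewed in M_M (x) M_N (x) M_M (x) M_N via
   e_{ia,jb} (x) e_{kc,ld} = e_ij (x) e_ab (x) e_kl (x) e_cd *)
Definition view4 M N (X : bfam ('I_M * 'I_N)%type) : mx4 M N :=
  fun x y =>
    let: (i, a, k, c) := x in let: (j, b, l, d) := y in
    X (i, a) (j, b) (k, c) (l, d).

(* leg numbering: X = sum X i j k l e_ij (x) e_kl ; X_13 = sum ... e_ij (x) 1 (x) e_kl (x) 1 *)
Definition leg13 M N (X : bfam 'I_M) : mx4 M N :=
  fun x y =>
    let: (i, a, k, c) := x in let: (j, b, l, d) := y in
    X i j k l * (a == b)%:R * (c == d)%:R.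

Definition leg24 M N (X : bfam 'I_N) : mx4 M N :=
  fun x y =>
    let: (i, a, k, c) := x in let: (j, b, l, d) := y in
    X a b c d * (i == j)%:R * (k == l)%:R.

Definition Qdelta M N (Q : 'M[C]_(M, N)) : mx4 M N :=
  fun x y =>
    let: (i, c, j, d) := x in
    (x == y)%:R * ((Q i c * Q j d) / (Q i d * Q j c)).

(* Main.v *)
Require Import Defs.
From HB Require Import structures.
From mathcomp Require Import all_boot all_order all_algebra.
From mathcomp Require Import complex.
From mathcomp Require Import Rstruct.
From Stdlib Require Import FunctionalExtensionality.
From mathcomp Require Import ring.
Import Order.TTheory GRing.Theory Num.Theory.
Local Open Scope ring_scope.

Lemma mul_diag_aux M N (Q : 'M[C]_(M, N)) (A B : mx4 M N) x y (z : leg4 M N) :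
  (\sum_(w : leg4 M N) A x w * Qdelta Q w z) * B z y =
  A x z * Qdelta Q z z * B z y.
Proof.
rewrite (bigD1 z) //= big1 ?addr0 //.
case=> [[[p q] r] t] /negbTE Hne; rewrite /Qdelta Hne; by rewrite mul0r mulr0.
Qed.

Lemma sum_single M N (F : leg4 M N -> C) z0 :
  (forall z, z != z0 -> F z = 0) -> \sum_(z : leg4 M N) F z = F z0.
Proof. by move=> H; rewrite (bigD1 z0) //= big1 ?addr0. Qed.

Theorem proposition2p6 (M N : nat)
  (U : 'I_M -> 'I_M -> 'M[C]_M) (V : 'I_N -> 'I_N -> 'M[C]_N)
  (Q : 'M[C]_(M, N)) :
  projective_model U -> projective_model V ->
  (forall i a, `|Q i a| = 1) ->
  view4 (tilde (tensQ U V Q)) =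
    mul4 (mul4 (@leg13 M N (tilde (bfam_of U))) (Qdelta Q))
         (@leg24 M N (tilde (bfam_of V)))
  /\
  view4 (tilde (Qtens U V Q)) =
    mul4 (mul4 (@leg24 M N (tilde (bfam_of V))) (Qdelta Q))
         (@leg13 M N (tilde (bfam_of U))).
Proof.
move=> _ _ _; split; apply: functional_extensionality => x;
  apply: functional_extensionality => y;
  rewrite /mul4 (eq_bigr _ (fun z _ => @mul_diag_aux _ _ _ _ _ _ _ z));
  case: x => [[[i a] k] c]; case: y => [[[j b] l] d].
- rewrite (@sum_single _ _ _ (j, a, l, c)).
    by rewrite /= !eqxx /tilde /bfam_of /=; ring.
  case=> [[[j' b'] l'] d'] Hne /=.
  case: (eqVneq a b') => [Eb|Hb]; last by rewrite !(mulr0, mul0r).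
  case: (eqVneq c d') => [Ed|Hd]; last by rewrite !(mulr0, mul0r).
  case: (eqVneq j' j) => [Ej|Hj]; last by rewrite !(mulr0, mul0r).
  case: (eqVneq l' l) => [El|Hl]; last by rewrite !(mulr0, mul0r).
  by move: Hne; rewrite Ej El Eb Ed eqxx.
- rewrite (@sum_single _ _ _ (i, b, k, d)).
    by rewrite /= !eqxx /tilde /bfam_of /=; ring.
  case=> [[[j' b'] l'] d'] Hne /=.
  case: (eqVneq i j') => [Ei|Hi]; last by rewrite !(mulr0, mul0r).
  case: (eqVneq k l') => [Ek|Hk]; last by rewrite !(mulr0, mul0r).
  case: (eqVneq b' b) => [Eb|Hb]; last by rewrite !(mulr0, mul0r).
  case: (eqVneq d' d) => [Ed|Hd]; last by rewrite !(mulr0, mul0r).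
  by move: Hne; rewrite -Ei -Ek Eb Ed eqxx.
Qed.
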